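(* Let $m$ be a prime power and let $l,s,t$ be positive integers with $m\geq l-1$ and $2t-1\leq l$, and let $c\geq t$ be an integer with $l=c(t-1)+r$ for some $r\in\{t,\ldots,c\}$. Let $C$ be an $s$-ary $c$-frameproof code of length $l$ over an alphabet $S$ satisfying Property $P(t)$ with special element $\infty$, and put $T=S\setminus\{\infty\}$. Let $\alpha_1,\ldots,\alpha_l$ be distinct elements of $\mathbb{F}_m\cup\{\infty\}$. For a polynomial $f\in\mathbb{F}_m[X]$ let $f_\infty$ denote the coefficient of $X^{t-1}$ in $f$. For each codeword $B=(b_1,\ldots,b_l)\in C$ and each $f\in\mathbb{F}_m[X]$ with $\deg f\leq t-1$, define the word $w(B,f)$ of length $l$ over the alphabet $(T\times\mathbb{F}_m)\cup\{(\infty,\infty)\}$ whose $j$-th entry is $(\infty,\infty)$ if $b_j=\infty$; $(b_j,f_\infty)$ if $b_j\neq\infty$ and $\alpha_j=\infty$; and $(b_j,f(\alpha_j))$ otherwise. Let $C'$ be the set of all such words $w(B,f)$. Then $C'$ is a $c$-frameproof code satisfying Property $P(t)$ with special element $(\infty,\infty)$, and $C'\cup\{(\infty,\infty,\ldots,(\infty,\infty))\}$ (adjoining the word all of whose entries equal $(\infty,\infty)$) is still a $c$-frameproof code.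
   Context: Let $F$ be a finite alphabet and $l$ a positive integer. For $P\subseteq F^l$, $desc(P)=\{x\in F^l: \text{for every } i \text{ there is } y\in P \text{ with } x_i=y_i\}$. For an integer $c\geq 2$, a $c$-frameproof code is a subset $C\subseteq F^l$ with $desc(P)\cap C=P$ for every $P\subseteq C$ with $|P|\leq c$. A code is $s$-ary if its alphabet has size $s$. A $c$-frameproof code $C$ over an alphabet $S$ satisfies Property $P(t)$ if there is a special element $\infty\in S$ such that every codeword has at most $t-1$ coordinates equal to $\infty$ and every codeword is uniquely determined by specifying $t$ of its components not equal to $\infty$ (i.e., if $x,y\in C$ agree in $t$ coordinates where their common value is not $\infty$, then $x=y$). $\mathbb{F}_m$ denotes the finite field of order $m$. *)

(* Defs.v *)
From mathcomp Require Import all_boot all_order all_algebra all_field.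
Set Implicit Arguments. Unset Strict Implicit. Unset Printing Implicit Defensive.
Import GRing.Theory.
Local Open Scope ring_scope.

Definition word (A : finType) (l : nat) := {ffun 'I_l -> A}.

Definition desc (A : finType) (l : nat) (P : {set word A l}) : {set word A l} :=
  [set x : word A l | [forall i : 'I_l, [exists y in P, x i == y i]]].

Definition frameproof (A : finType) (l c : nat) (C : {set word A l}) : Prop :=
  forall P : {set word A l}, P \subset C -> (#|P| <= c)%N -> desc P :&: C = P.

Definition propP (A : finType) (l t : nat) (inf : A) (C : {set word A l}) : Prop :=
  (forall x, x \in C -> (#|[set i : 'I_l | x i == inf]| <= t.-1)%N) /\
  (forall x y, x \in C -> y \in C ->
     forall I : {set 'I_l}, #|I| = t ->
       (forall i, i \in I -> x i = y i /\ x i != inf) -> x = y).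

(* The new alphabet (T x F_m) u {(inf,inf)} is modelled as option (S * F):
   None stands for (inf,inf), Some (b, a) for (b, a) (only b <> inf occurs). *)
Definition wBf (S : finType) (F : finFieldType) (l t : nat) (inf : S)
  (alpha : 'I_l -> option F) (B : word S l) (f : {poly F}) : word (option (S * F)) l :=
  [ffun j => if B j == inf then None
             else Some (B j, match alpha j with
                             | None => f`_(t.-1)
                             | Some a => f.[a] end)].

(* Main.v *)
Require Import Defs.
From mathcomp Require Import all_boot all_order all_algebra all_field zify.
Import GRing.Theory.
Local Open Scope ring_scope.
Set Implicit Arguments. Unset Strict Implicit.

Lemma card_cover (A : finType) (l k : nat) (Q : {set A}) (N : {set 'I_l})
  (S : A -> {set 'I_l}) :
  N \subset \bigcup_(y in Q) S y -> (forall y, y \in Q -> #|S y| <= k)%N ->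
  (#|N| <= #|Q| * k)%N.
Proof.
move=> sub hk; apply: leq_trans (subset_leq_card sub) _.
apply: (@leq_trans (\sum_(y in Q) #|S y|)%N).
  apply: (big_ind2 (fun (X : {set 'I_l}) n => #|X| <= n)%N).
  - by rewrite cards0.
  - move=> X1 n1 X2 n2 h1 h2; apply: leq_trans (leq_card_setU X1 X2) _.
    exact: leq_add.
  - by [].
rewrite -sum_nat_const; exact: leq_sum.
Qed.

Lemma sub_card (T : finType) (A : {set T}) (t : nat) :
  (t <= #|A|)%N -> exists I : {set T}, I \subset A /\ #|I| = t.
Proof.
move/card_geqP=> [s [us ss subs]]; exists [set x in s]; split.
  by apply/subsetP=> x; rewrite inE => /subs.
by rewrite cardsE -ss; apply/card_uniqP.
Qed.

Lemma uniq_pmap_inj (A B : eqType) (f : A -> option B) (s : seq A) :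
  injective f -> uniq s -> uniq (pmap f s).
Proof.
move=> inj; elim: s => //= x s IH /andP[xs us].
case E: (f x) => [b|] /=; last exact: IH.
rewrite IH // andbT mem_pmap; apply/negP => /mapP[y ys Ey].
by move: xs; rewrite (inj _ _ (etrans E Ey)) ys.
Qed.

Lemma size_le_coef (F : fieldType) (p : {poly F}) (n : nat) :
  (size p <= n.+1)%N -> p`_n = 0 -> (size p <= n)%N.
Proof.
move=> hs hc; case: (ltnP (size p) n.+1) => // h.
have e : size p = n.+1 by apply/eqP; rewrite eqn_leq hs h.
have : lead_coef p = 0 by rewrite lead_coefE e.
by move/eqP; rewrite lead_coef_eq0 => /eqP ->; rewrite size_poly0.
Qed.

Lemma poly_agree (F : fieldType) (l t : nat) (alpha : 'I_l -> option F)
  (I : {set 'I_l}) (f g : {poly F}) :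
  injective alpha -> #|I| = t -> (size f <= t)%N -> (size g <= t)%N ->
  (forall i, i \in I -> match alpha i with None => f`_(t.-1) = g`_(t.-1)
                                         | Some a => f.[a] = g.[a] end) -> f = g.
Proof.
move=> inj cI sf sg hag; apply/eqP; rewrite -subr_eq0; apply/negP => /negP nz.
set h := f - g in nz.
have sh : (size h <= t)%N by apply: leq_trans (size_polyD _ _) _; rewrite size_polyN geq_max sf sg.
have roots : forall I' : {set 'I_l}, I' \subset I -> all (root h) (pmap alpha (enum I')).
  move=> I' sI; apply/allP => a; rewrite mem_pmap => /mapP[i]; rewrite mem_enum => iI' ea.
  have := hag i (subsetP sI i iI'); rewrite -ea => e.
  by rewrite /root /h hornerD hornerN e subrr.
have uq : forall I' : {set 'I_l}, uniq (pmap alpha (enum I')).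
  by move=> I'; apply: uniq_pmap_inj => //; exact: enum_uniq.
case: (pickP [pred j in I | alpha j == None]) => [j0 /andP[j0I /eqP aj0] | hn].
  have sz : size (pmap alpha (enum (I :\ j0))) = t.-1.
    rewrite (cardsD1 j0 I) j0I /= in cI; rewrite size_pmap.
    rewrite -cI add1n /= cardE -count_predT; apply: eq_in_count => i; rewrite mem_enum !inE => /andP[ij _].
    by case E: (alpha i) => //; move: ij; rewrite (inj i j0) ?eqxx // E aj0.
  have := max_poly_roots nz (roots _ (subD1set I j0)) (uq _); rewrite sz.
  have := hag j0 j0I; rewrite aj0 => ec.
  have : h`_(t.-1) = 0 by rewrite /h coefB ec subrr.
  move/(@size_le_coef _ h t.-1 (leq_trans sh (leqSpred t))) => le.
  by rewrite ltnNge le.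
have sz : size (pmap alpha (enum I)) = t.
  rewrite size_pmap -cI cardE -count_predT; apply: eq_in_count => i; rewrite mem_enum => iI.
  by case E: (alpha i) => //; have := hn i; rewrite /= iI E.
have := max_poly_roots nz (roots _ (subxx I)) (uq _); rewrite sz.
by rewrite ltnNge sh.
Qed.

Lemma wBf_eq (S : finType) (F : finFieldType) (l t : nat) (inf : S)
  (alpha : 'I_l -> option F) (B B' : word S l) (f g : {poly F}) (i : 'I_l) :
  wBf t inf alpha B f i = wBf t inf alpha B' g i -> wBf t inf alpha B f i != None ->
  [/\ B i = B' i, B i != inf &
     match alpha i with None => f`_(t.-1) = g`_(t.-1) | Some a => f.[a] = g.[a] end].
Proof.
rewrite !ffunE; case: eqP => [Bi|Bi]; first by move=> _; rewrite eqxx.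
case: eqP => [B'i|B'i] // [e1 e2] _.
split => //.
by case: (alpha i) e2.
Qed.

Lemma wBf_None (S : finType) (F : finFieldType) (l t : nat) (inf : S)
  (alpha : 'I_l -> option F) (B : word S l) (f : {poly F}) :
  [set i | wBf t inf alpha B f i == None] = [set i | B i == inf].
Proof. apply/setP => i; rewrite !inE ffunE; by case: (B i == inf). Qed.

Lemma propC' (F : finFieldType) (l t : nat) (S : finType) (inf : S)
  (C : {set word S l}) (alpha : 'I_l -> option F)
  (C' : {set word (option (S * F)) l}) :
  propP t inf C -> injective alpha ->
  (forall x, x \in C' <->
     exists B (f : {poly F}), [/\ B \in C, (size f <= t)%N & x = wBf t inf alpha B f]) ->
  propP t None C'.
Proof.
move=> [hC1 hC2] inj hC'; split.
  by move=> x /hC' [B [f [BC _ ->]]]; rewrite wBf_None; apply: hC1.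
move=> x y /hC' [B [f [BC sf ->]]] /hC' [B' [g [B'C sg ->]]] I cI hI.
have eB : B = B'.
  apply: (hC2 _ _ BC B'C I cI) => i iI; have [e ne] := hI i iI.
  by have [] := @wBf_eq _ _ _ _ _ _ _ _ _ _ _ e ne.
subst B'; suff -> : f = g by []. apply: (poly_agree inj cI sf sg) => i iI.
have [e ne] := hI i iI; by have [] := @wBf_eq _ _ _ _ _ _ _ _ _ _ _ e ne.
Qed.

Lemma cover (A : finType) (l t c r : nat) (C' Q : {set word A l}) (inf : A)
  (x : word A l) :
  propP t inf C' -> (0 < t)%N -> l = (c * (t - 1) + r)%N -> (t <= r)%N -> Q \subset C' ->
  (#|Q| <= c)%N -> x \in C' ->
  (forall i, x i != inf -> exists2 y, y \in Q & x i = y i) -> x \in Q.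
Proof.
move=> [h1 h2] t0 el tr sQ cQ xC hcov.
set N := [set i | x i != inf].
have cN : (l - (t - 1) <= #|N|)%N.
  have := cardsC [set i | x i == inf]; rewrite card_ord => e.
  have -> : N = ~: [set i | x i == inf] by apply/setP => i; rewrite !inE.
  have := h1 x xC; rewrite -subn1; move=> hh; move: e hh; set a := #|[set _ | _]|; set b := #|~: _|; move=> e hh; clear -e hh; lia.
case: (pickP [pred y in Q | t <= #|[set i in N | x i == y i]|]%N) => [y /andP[yQ ct] | hn].
  have [I [sI cI]] := sub_card ct.
  suff -> : x = y by [].
  apply: (h2 _ _ xC (subsetP sQ y yQ) I cI) => i iI.
  move: (subsetP sI i iI); rewrite !inE => /andP[ni /eqP e]; split => //.
exfalso.
have : (#|N| <= #|Q| * (t - 1))%N.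
  apply: (@card_cover _ l (t - 1) Q N (fun y => [set i in N | x i == y i])).
    apply/subsetP => i iN; have [y yQ e] := hcov i ltac:(by move: iN; rewrite inE).
    by apply/bigcupP; exists y => //; rewrite inE iN e eqxx.
  move=> y yQ; have := hn y; rewrite /= yQ /= => /negbT; rewrite -ltnNge.
  set k := #|_|; move=> hh; lia.
move=> hh; have h3 := leq_trans cN (leq_trans hh (leq_mul cQ (leqnn (t - 1)))).
clear -h3 el tr t0; lia.
Qed.

Lemma fp_gen (A : finType) (l t c r : nat) (C' P : {set word A l}) (inf : A) :
  propP t inf C' -> (0 < t)%N -> l = (c * (t - 1) + r)%N -> (t <= r)%N ->
  P \subset C' -> (#|P| <= c)%N -> desc P :&: C' = P.
Proof.
move=> pC' t0 el tr sP cP; apply/setP => x; rewrite inE /desc inE.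
apply/idP/idP.
  case/andP => /forallP hd xC; apply: (cover pC' t0 el tr sP cP xC) => i _.
  by have /existsP[y /andP[yP /eqP e]] := hd i; exists y.
move=> xP; rewrite (subsetP sP x xP) andbT; apply/forallP => i; apply/existsP.
by exists x; rewrite xP eqxx.
Qed.

Unset Implicit Arguments.

Theorem lemma2 (F : finFieldType) (l s t c r : nat) (S : finType) (inf : S)
  (C : {set word S l}) (alpha : 'I_l -> option F)
  (C' : {set word (option (S * F)) l}) :
  (0 < l)%N -> (0 < s)%N -> (0 < t)%N ->
  (l - 1 <= #|F|)%N -> (2 * t - 1 <= l)%N ->
  (t <= c)%N -> l = (c * (t - 1) + r)%N -> (t <= r <= c)%N ->
  #|S| = s ->
  frameproof c C -> propP t inf C ->
  injective alpha ->
  (forall x, x \in C' <->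
     exists B (f : {poly F}), [/\ B \in C, (size f <= t)%N & x = wBf t inf alpha B f]) ->
  [/\ frameproof c C', propP t None C' &
      frameproof c (C' :|: [set [ffun => None]])].
Proof.
move=> l0 s0 t0 _ _ tc el /andP[tr rc] _ fC pC inj hC'.
have pC' := propC' pC inj hC'.
split => //.
  by move=> P sP cP; apply: (fp_gen pC' t0 el tr sP cP).
move=> P sP cP; set z : word (option (S * F)) l := [ffun => None].
set Q := P :\ z.
have sQ : Q \subset C'.
  apply/subsetP => y; rewrite !inE => /andP[yz yP].
  by have := subsetP sP y yP; rewrite !inE (negbTE yz) orbF.
have QP : Q \subset P by apply: subsetDl.
have cQ : (#|Q| <= c)%N by apply: leq_trans (subset_leq_card QP) cP.
apply/setP => x; rewrite inE /desc inE; apply/idP/idP; last first.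
  move=> xP; rewrite (subsetP sP x xP) andbT; apply/forallP => i; apply/existsP.
  by exists x; rewrite xP eqxx.
case/andP => /forallP hd; rewrite inE => /orP [xC | xz].
  apply: (subsetP QP); apply: (cover pC' t0 el tr sQ cQ xC) => i xi.
  have /existsP[y /andP[yP /eqP e]] := hd i; exists y => //.
  rewrite !inE yP andbT; apply/negP => /eqP yz; move: xi.
  by rewrite e yz ffunE.
move: xz; rewrite inE => /eqP xz; subst x.
case: (boolP (z \in P)) => // zP; exfalso.
have : (#|[set: 'I_l]| <= #|Q| * (t - 1))%N.
  apply: (@card_cover _ l (t - 1) Q _ (fun y => [set i | y i == None])).
    apply/subsetP => i _; have /existsP[y /andP[yP /eqP e]] := hd i.
    apply/bigcupP; exists y.
      rewrite !inE yP andbT; apply/negP => /eqP yz; by move: yP; rewrite yz (negbTE zP).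
    by rewrite inE -e ffunE.
  move=> y yQ; have := pC'.1 y (subsetP sQ y yQ); rewrite -subn1 //.
rewrite cardsT card_ord => hh; have h3 := leq_trans hh (leq_mul cQ (leqnn (t - 1))).
clear -h3 el tr t0; lia.
Qed.
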